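(* For any linear $t$-private PIR scheme ($t\ge1$), any file indices $i,i'\in[m]$ and any $\mathcal{F}\subseteq[m]$, $$\mathbb{E}_{\mathbf{q}\sim Q^i}\,|\mathrm{colsupp}(\mathbf{q}[\psi_\alpha(\mathcal{F}),:])|=\mathbb{E}_{\mathbf{q}\sim Q^{i'}}\,|\mathrm{colsupp}(\mathbf{q}[\psi_\alpha(\mathcal{F}),:])|,$$ where the expectations are over the query distributions for files $i$ and $i'$ respectively.
   Context: In a linear PIR scheme with $n$ servers and $m$ files (each with $\alpha$ stripes), the query for file $i$ is a random matrix $Q^i$ with realizations $\mathbf{q}\in\mathbb{F}^{\alpha m\times\beta n}$, and server $j$ receives the columns $\psi_\beta(\{j\})$, where $\psi_\beta(\mathcal{I})=\bigcup_{i\in\mathcal{I}}\{(i-1)\beta+1,\dots,i\beta\}$. Privacy implies in particular that the query received by each single server has the same distribution for every desired index. $\mathbf{q}[\mathcal{I},:]$ is the submatrix of rows $\mathcal{I}$; $\mathrm{colsupp}$ denotes the set of indices of nonzero columns. *)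

(* Defs.v *)
From mathcomp Require Import all_boot all_order all_algebra.
Set Implicit Arguments. Unset Strict Implicit. Unset Printing Implicit Defensive.
Import Order.TTheory GRing.Theory Num.Theory.
Local Open Scope ring_scope.

(* Indices are 0-based: row r of a (a*k)-row matrix belongs to block r %/ a,
   so psi a I = union over i in I of {i*a, ..., i*a + a - 1}
   (the paper's psi_a(I) with 1-based indexing). *)
Definition psi (a k : nat) (I : {set 'I_k}) : {set 'I_(a * k)} :=
  [set r : 'I_(a * k) | [exists i in I, (r %/ a)%N == val i]].

Definition colsupp (F : fieldType) (p c : nat) (rows : {set 'I_p})
  (q : 'M[F]_(p, c)) : {set 'I_c} :=
  [set j : 'I_c | [exists r in rows, q r j != 0]].

Definition is_dist (R : numDomainType) (T : finType) (P : {ffun T -> R}) : Prop :=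
  (forall x, 0 <= P x) /\ \sum_(x : T) P x = 1.

Definition agree_on (F : fieldType) (p c : nat) (cols : {set 'I_c})
  (q M : 'M[F]_(p, c)) : bool :=
  [forall r : 'I_p, forall j in cols, q r j == M r j].

(* t-privacy of the query family Q (Q i = distribution of the query matrix for
   desired file i, an (alpha m) x (beta n) matrix; server j receives the columns
   psi beta {j}): for every set T of at most t servers, the joint distribution
   of the columns psi beta T received by the servers in T does not depend on i. *)
Definition t_private (F : finFieldType) (R : numDomainType) (n m alpha beta t : nat)
  (Q : 'I_m -> {ffun 'M[F]_(alpha * m, beta * n) -> R}) : Prop :=
  forall (T : {set 'I_n}), (#|T| <= t)%N ->
  forall (i i' : 'I_m) (M : 'M[F]_(alpha * m, beta * n)),
    \sum_(q | agree_on (psi beta T) q M) Q i q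
    = \sum_(q | agree_on (psi beta T) q M) Q i' q.

Definition exp_colsupp (F : finFieldType) (R : numDomainType) (n m alpha beta : nat)
  (P : {ffun 'M[F]_(alpha * m, beta * n) -> R}) (Fs : {set 'I_m}) : R :=
  \sum_(q : 'M[F]_(alpha * m, beta * n)) P q * (#|colsupp (psi alpha Fs) q|)%:R.

(* Main.v *)
Require Import Defs.
From mathcomp Require Import all_boot all_order all_algebra.
Set Implicit Arguments. Unset Strict Implicit. Unset Printing Implicit Defensive.
Import Order.TTheory GRing.Theory Num.Theory.
Local Open Scope ring_scope.

Section Aux.
Variables (F : finFieldType) (p c : nat) (C : {set 'I_c}).

Lemma agree_refl (q : 'M[F]_(p, c)) : agree_on C q q.
Proof. by apply/forallP=> r; apply/forall_inP=> j _. Qed.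

Lemma agree_sym (q M : 'M[F]_(p, c)) : agree_on C q M -> agree_on C M q.
Proof.
move/forallP=> H; apply/forallP=> r; apply/forall_inP=> j jC.
by have /forall_inP/(_ j jC) := H r; rewrite eq_sym.
Qed.

Lemma agree_trans (q M N : 'M[F]_(p, c)) :
  agree_on C q M -> agree_on C M N -> agree_on C q N.
Proof.
move/forallP=> H1 /forallP H2; apply/forallP=> r; apply/forall_inP=> j jC.
have /forall_inP/(_ j jC)/eqP -> := H1 r.
by have /forall_inP/(_ j jC) := H2 r.
Qed.

Lemma agree_entry (q M : 'M[F]_(p, c)) r j : agree_on C q M -> j \in C -> q r j = M r j.
Proof. by move/forallP/(_ r)/forall_inP=> H jC; apply/eqP/H. Qed.
End Aux.

Lemma det_exp (F : finFieldType) (R : realFieldType) (p c : nat) (C : {set 'I_c})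
  (P1 P2 : {ffun 'M[F]_(p, c) -> R}) (g : 'M[F]_(p, c) -> R) :
  (forall M, \sum_(q | agree_on C q M) P1 q = \sum_(q | agree_on C q M) P2 q) ->
  (forall q M, agree_on C q M -> g q = g M) ->
  \sum_q P1 q * g q = \sum_q P2 q * g q.
Proof.
move=> Hpriv Hg.
pose N (M : 'M[F]_(p, c)) := #|[set q | agree_on C q M]|.
pose h M := g M / (N M)%:R.
have claim : forall q, g q = \sum_(M | agree_on C q M) h M.
  move=> q.
  have E : forall M, agree_on C q M -> h M = g q / (N q)%:R.
    move=> M aqM; rewrite /h (Hg q M aqM); congr (_ / _%:R).
    rewrite /N; apply: eq_card=> x; rewrite !inE.
    apply/idP/idP=> H; first exact: agree_trans H (agree_sym aqM).
    exact: agree_trans H aqM.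
  rewrite (eq_bigr _ E).
  rewrite (eq_bigl (fun M => M \in [set M | agree_on C q M])); last by move=> M; rewrite inE.
  rewrite sumr_const.
  have -> : #|[set M | agree_on C q M]| = N q.
    rewrite /N; apply: eq_card=> x; rewrite !inE.
    by apply/idP/idP; apply: agree_sym.
  have Npos : (0 < N q)%N by apply/card_gt0P; exists q; rewrite inE agree_refl.
  by rewrite -[RHS]mulr_natr divfK // pnatr_eq0 -lt0n.
have step : forall P : {ffun 'M[F]_(p, c) -> R},
    \sum_q P q * g q = \sum_M (\sum_(q | agree_on C q M) P q) * h M.
  move=> P.
  transitivity (\sum_q \sum_M (if agree_on C q M then P q * h M else 0)).
    apply eq_bigr=> q _; rewrite claim mulr_sumr big_mkcond /=.
    by [].
  rewrite exchange_big /=; apply eq_bigr=> M _.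
  by rewrite mulr_suml [RHS]big_mkcond.
by rewrite !step; apply eq_bigr=> M _; rewrite Hpriv.
Qed.

Theorem lemma9 (F : finFieldType) (R : realFieldType) (n m alpha beta t : nat)
  (Q : 'I_m -> {ffun 'M[F]_(alpha * m, beta * n) -> R}) :
  (forall i, is_dist (Q i)) ->
  (1 <= t)%N ->
  t_private t Q ->
  forall (i i' : 'I_m) (Fs : {set 'I_m}),
    exp_colsupp (Q i) Fs = exp_colsupp (Q i') Fs.
Proof.
move=> _ t1 Hpriv i i' Fs.
set rows := psi alpha Fs.
pose g (j : 'I_n) (q : 'M[F]_(alpha * m, beta * n)) :=
  #|colsupp rows q :&: psi beta [set j]|.
have psi1 : forall (c : 'I_(beta * n)) (j : 'I_n),
    (c \in psi beta [set j]) = (c %/ beta == j)%N.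
  move=> c j; rewrite /psi inE; apply/existsP/idP.
    by case=> x /andP[]; rewrite inE => /eqP ->.
  by move=> H; exists j; rewrite inE eqxx.
have one : forall c : 'I_(beta * n), (\sum_(j < n) (c \in psi beta [set j]) = 1)%N.
  move=> c.
  have bpos : (0 < beta)%N.
    by case: (posnP beta) => // b0; have := ltn_ord c; move: (val c) => v; rewrite b0.
  have lt : (c %/ beta < n)%N.
    have := ltn_ord c; move: (nat_of_ord c) => v; by rewrite ltn_divLR // mulnC.
  rewrite (bigD1 (Ordinal lt)) //= psi1 eqxx big1 // => j /negbTE; rewrite psi1.
  by rewrite -(inj_eq val_inj) /= eq_sym => ->.
have dec : forall q, #|colsupp rows q| = (\sum_(j < n) g j q)%N.
  move=> q; rewrite /g.
  transitivity (\sum_(c : 'I_(beta * n)) \sum_(j < n) ((c \in colsupp rows q) && (c \in psi beta [set j]) : nat))%N.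
    rewrite -sum1_card big_mkcond /=; apply eq_bigr => c _.
    case: (c \in colsupp rows q) => /=; last by rewrite big1.
    by rewrite -(one c).
  rewrite exchange_big /=; apply eq_bigr => j _.
  by rewrite -sum1_card [RHS]big_mkcond /=; apply eq_bigr => c _; rewrite in_setI; case: (_ && _).
rewrite /exp_colsupp.
under eq_bigr do rewrite dec natr_sum mulr_sumr.
under [in RHS]eq_bigr do rewrite dec natr_sum mulr_sumr.
rewrite exchange_big [in RHS]exchange_big /=; apply eq_bigr => j _.
apply: (@det_exp F R _ _ (psi beta [set j])).
  by move=> M; apply: Hpriv; rewrite cards1.
move=> q M aqM; congr (_%:R); rewrite /g; apply: eq_card => c.
rewrite !in_setI; case cJ: (c \in psi beta [set j]); rewrite ?andbF ?andbT //.
rewrite /colsupp !inE; apply: eq_existsb => r.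
by rewrite (agree_entry r aqM cJ).
Qed.
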